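(* Let $n\ge2$, let $\delta_n=(n-1,n-2,\ldots,2,1)$, and let $\lambda\subseteq\delta_n$ be a partition. Define $\varphi$ on $n\times n$ matrices $M$ by $\varphi(M)_{ij}=M_{ij}+1$ if $j=n-i+2$ (so $2\le i\le n$), and $\varphi(M)_{ij}=M_{ij}$ otherwise. Then $\varphi$ is an integral equivalence from $\mathrm{PASM}(\delta_n/\lambda,n,n)$ onto $\mathrm{ASMCRY}(\lambda,n)$.
   Context: A partition $\mu=(\mu_1\ge\mu_2\ge\cdots)$ is a weakly decreasing sequence of nonnegative integers with finitely many nonzero terms, identified with the set of matrix positions $\{(i,j):i\ge1,1\le j\le\mu_i\}$; $\mu\subseteq\nu$ means $\mu_i\le\nu_i$ for all $i$. For $\mu\subseteq\delta_n$, the $n\times n$ matrix $M^\mu$ has entries $M^\mu_{1,\mu_1+1}=1$; for each $1\le k\le n-1$ with $\mu_k>\mu_{k+1}$, $M^\mu_{k+1,\mu_{k+1}+1}=1$ and $M^\mu_{k+1,\mu_k+1}=-1$; all other entries $0$. $\mathrm{PASM}(\delta_n/\lambda,n,n)$ is the convex hull in $\mathbb{R}^{n^2}$ of $\{M^\mu:\lambda\subseteq\mu\subseteq\delta_n\}$. An $n\times n$ alternating sign matrix is a matrix with entries in $\{-1,0,1\}$ whose partial column sums $\sum_{i'\le i}M_{i'j}$ and partial row sums $\sum_{j'\le j}M_{ij'}$ all lie in $\{0,1\}$ and whose every full row and column sum equals $1$; $\mathrm{ASM}(n)$ is the convex hull of these. $\mathrm{ASMCRY}(\lambda,n)=\{(a_{ij})\in\mathrm{ASM}(n):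 a_{ij}=0 \text{ whenever } i+j\ge n+3 \text{ or } (i,j)\in\lambda\}$. An integral equivalence between integer polytopes $\mathcal{P}\subset\mathbb{R}^d$, $\mathcal{Q}\subset\mathbb{R}^r$ is an affine map $\mathbb{R}^d\to\mathbb{R}^r$ mapping $\mathcal{P}$ bijectively onto $\mathcal{Q}$ and $\mathbb{Z}^d\cap\mathrm{aff}(\mathcal{P})$ bijectively onto $\mathbb{Z}^r\cap\mathrm{aff}(\mathcal{Q})$. *)

(* Defs.v *)
From HB Require Import structures.
From mathcomp Require Import all_boot all_order all_algebra.
From mathcomp Require Import reals.

Set Implicit Arguments.
Unset Strict Implicit.
Unset Printing Implicit Defensive.

Import Order.TTheory GRing.Theory Num.Theory.
Local Open Scope ring_scope.

(* Partitions: a partition mu is a weakly decreasing finite list of naturals;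
   mu_i (1-based) is [nth 0 mu (i-1)], and mu_i = 0 beyond the list.
   Throughout, matrix indices are 0-based: paper position (i,j) is (i-1,j-1). *)
Definition is_partition (mu : seq nat) : Prop := sorted geq mu.

Definition subpart (mu nu : seq nat) : Prop :=
  forall i : nat, (nth 0 mu i <= nth 0 nu i)%N.

Definition delta (n : nat) : seq nat := rev (iota 1 n.-1).

Definition in_part (mu : seq nat) (i j : nat) : bool := (j < nth 0 mu i)%N.

(* The matrix M^mu.  0-based: row 0 has a 1 in column mu_1;
   for 1 <= r <= n-1 (i.e. k = r, paper row k+1) with mu_k > mu_{k+1}:
   a 1 in column mu_{k+1} and a -1 in column mu_k. *)
Definition Mmu (R : pzRingType) (n : nat) (mu : seq nat) : 'M[R]_n :=
  \matrix_(i < n, j < n)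
    if (i == 0 :> nat) then ((j == nth 0 mu 0 :> nat)%:R : R)
    else if (nth 0 mu i < nth 0 mu i.-1)%N then
      ((j == nth 0 mu i :> nat)%:R - (j == nth 0 mu i.-1 :> nat)%:R : R)
    else 0.

Definition conv (R : realType) (V : lmodType R) (S : V -> Prop) : V -> Prop :=
  fun x => exists (k : nat) (p : 'I_k -> V) (w : 'I_k -> R),
    [/\ forall i, S (p i), forall i, 0 <= w i, \sum_(i < k) w i = 1
      & x = \sum_(i < k) w i *: p i].

Definition aff (R : realType) (V : lmodType R) (S : V -> Prop) : V -> Prop :=
  fun x => exists (k : nat) (p : 'I_k -> V) (w : 'I_k -> R),
    [/\ forall i, S (p i), \sum_(i < k) w i = 1
      & x = \sum_(i < k) w i *: p i].

Definition intmx (R : realType) (m n : nat) (M : 'M[R]_(m, n)) : Prop :=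
  forall i j, exists z : int, M i j = z%:~R.

Definition PASM (R : realType) (n : nat) (lambda : seq nat) : 'M[R]_n -> Prop :=
  conv (fun M : 'M[R]_n => exists mu : seq nat,
          [/\ is_partition mu, subpart lambda mu, subpart mu (delta n)
            & M = Mmu R n mu]).

Definition is_ASM (R : realType) (n : nat) (M : 'M[R]_n) : Prop :=
  [/\ forall i j, M i j = 0 \/ M i j = 1 \/ M i j = -1,
      forall i j, let s := \sum_(i' < n | (i' <= i)%N) M i' j in s = 0 \/ s = 1,
      forall i j, let s := \sum_(j' < n | (j' <= j)%N) M i j' in s = 0 \/ s = 1,
      forall i, \sum_(j < n) M i j = 1
    & forall j, \sum_(i < n) M i j = 1].

Definition ASM (R : realType) (n : nat) : 'M[R]_n -> Prop := conv (@is_ASM R n).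

(* ASMCRY(lambda, n): paper condition i+j >= n+3 (1-based) is i+j >= n+1 0-based *)
Definition ASMCRY (R : realType) (n : nat) (lambda : seq nat) : 'M[R]_n -> Prop :=
  fun A => ASM A /\
    (forall i j : 'I_n, ((n.+1 <= i + j)%N || in_part lambda i j) -> A i j = 0).

(* phi(M)_{ij} = M_{ij} + 1 iff j = n - i + 2 (1-based), i.e. i + j = n 0-based *)
Definition phi (R : realType) (n : nat) (M : 'M[R]_n) : 'M[R]_n :=
  \matrix_(i < n, j < n) (M i j + (if (i + j == n)%N then 1 else 0)).

Definition affine_map (R : realType) (m n m' n' : nat)
    (f : 'M[R]_(m, n) -> 'M[R]_(m', n')) : Prop :=
  exists (L : {linear 'M[R]_(m, n) -> 'M[R]_(m', n')}) (b : 'M[R]_(m', n')),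
    forall x, f x = L x + b.

Definition bij_onto (T U : Type) (f : T -> U) (A : T -> Prop) (B : U -> Prop) : Prop :=
  [/\ forall x, A x -> B (f x),
      forall x y, A x -> A y -> f x = f y -> x = y
    & forall y, B y -> exists x, A x /\ f x = y].

Definition integral_equiv (R : realType) (m n m' n' : nat)
    (f : 'M[R]_(m, n) -> 'M[R]_(m', n'))
    (P : 'M[R]_(m, n) -> Prop) (Q : 'M[R]_(m', n') -> Prop) : Prop :=
  [/\ affine_map f,
      bij_onto f P Q
    & bij_onto f (fun x => intmx x /\ aff P x) (fun y => intmx y /\ aff Q y)].

(* Main.v *)
Require Import Defs.
From mathcomp Require Import all_boot all_order all_algebra.
From mathcomp Require Import reals.
From mathcomp Require Import zify ring lra.

Set Implicit Arguments.
Unset Strict Implicit.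
Unset Printing Implicit Defensive.
Import Order.TTheory GRing.Theory Num.Theory.
Local Open Scope ring_scope.

Section Aux.
Variable R : realType.
Variable n : nat.

Definition psum (F : 'I_n -> R) (k : nat) : R := \sum_(i < n | (i <= k)%N) F i.
Definition ee (a j : nat) : R := (j == a)%:R.
Definition Cmx : 'M[R]_n := \matrix_(i < n, j < n) (if (i + j == n)%N then 1 else 0).

Lemma phiE (M : 'M[R]_n) : phi M = M + Cmx.
Proof. by apply/matrixP => i j; rewrite !mxE. Qed.

Lemma b2R (b : bool) : (if b then 1 else 0 : R) = b%:R.
Proof. by case: b. Qed.

Lemma sum_ind (P : pred nat) (a : nat) :
  \sum_(j < n | P j) ee a j = ((P a) && (a < n)%N)%:R.
Proof.
case: (ltnP a n) => Ha.
- rewrite big_mkcond /= (bigD1 (Ordinal Ha)) //= /ee eqxx big1 ?addr0.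
    by rewrite andbT; case: (P a).
  move=> j; rewrite -(inj_eq val_inj) /= => /negbTE ->; by case: (P j).
- rewrite andbF big1 // => j _; rewrite /ee.
  have -> : (nat_of_ord j == a) = false.
    by apply/negbTE; rewrite neq_ltn (leq_trans (ltn_ord j) Ha).
  by [].
Qed.

Lemma psum0 (F : 'I_n -> R) (i : 'I_n) : nat_of_ord i = 0%N -> psum F 0 = F i.
Proof.
move=> Hi; rewrite /psum (big_pred1 i) // => i'.
by rewrite /= -(inj_eq val_inj) /= Hi leqn0.
Qed.

Lemma psumS (F : 'I_n -> R) k (Hk : (k.+1 < n)%N) :
  psum F k.+1 = psum F k + F (Ordinal Hk).
Proof.
rewrite /psum (bigD1 (Ordinal Hk)) //= addrC; congr (_ + _).
apply: eq_bigl => i'; rewrite -(inj_eq val_inj) /=.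
by rewrite -[(i' <= k)%N]/(i' < k.+1)%N; case: ltngtP.
Qed.

Lemma entry_psum (F : 'I_n -> R) (i : 'I_n) :
  F i = psum F i - (if (0 < i)%N then psum F i.-1 else 0).
Proof.
case Hi: (nat_of_ord i) => [|k] /=.
  by rewrite subr0 (psum0 F Hi).
have Hk : (k.+1 < n)%N by rewrite -Hi.
rewrite (psumS F Hk) [psum F k + _]addrC addrK; congr F; exact: val_inj.
Qed.

Lemma psumD (F G : 'I_n -> R) k : psum (fun i => F i + G i) k = psum F k + psum G k.
Proof. by rewrite /psum big_split. Qed.
Lemma psumB (F G : 'I_n -> R) k : psum (fun i => F i - G i) k = psum F k - psum G k.
Proof. by rewrite /psum sumrB. Qed.

Lemma psum_C (j : 'I_n) k : (k < n)%N -> psum (fun i => Cmx i j) k = (n <= k + j)%:R.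
Proof.
elim: k => [|k IH] Hk.
  rewrite (psum0 _ (i := Ordinal Hk)) // mxE /=.
  have -> : (j == n :> nat) = false by apply/negbTE; rewrite neq_ltn ltn_ord.
  by rewrite leqNgt ltn_ord.
rewrite (psumS _ Hk) IH ?(ltnW Hk) // mxE /= b2R.
case: (leqP n (k + j)) => H1.
  have -> : (k.+1 + j == n) = false by apply/negbTE; lia.
  have -> : (n <= k.+1 + j)%N by lia.
  by rewrite addr0.
case: (eqVneq (k.+1 + j)%N n) => H2.
  have -> : (n <= k.+1 + j)%N by lia.
  by rewrite add0r.
have -> : (n <= k.+1 + j)%N = false by apply/negbTE; lia.
by rewrite addr0.
Qed.


Lemma nth_delta k : nth 0%N (delta n) k = (n.-1 - k)%N.
Proof.
rewrite /delta; case: (ltnP k n.-1) => Hk.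
  rewrite nth_rev size_iota // nth_iota; lia.
rewrite nth_default ?size_rev ?size_iota //; lia.
Qed.

Lemma sorted_mono (s : seq nat) : is_partition s -> forall k, (nth 0%N s k.+1 <= nth 0%N s k)%N.
Proof.
move=> /(sortedP 0%N) H k; case: (ltnP k.+1 (size s)) => Hk.
  exact: H.
by rewrite (nth_default _ Hk).
Qed.

Lemma mono_sorted (s : seq nat) : (forall k, (nth 0%N s k.+1 <= nth 0%N s k)%N) -> is_partition s.
Proof. by move=> H; apply/(sortedP 0%N) => i _; exact: H. Qed.

Lemma mono_le (f : nat -> nat) : (forall k, (f k.+1 <= f k)%N) -> forall i k, (i <= k)%N -> (f k <= f i)%N.
Proof.
move=> H i k; elim: k => [|k IH]; first by rewrite leqn0 => /eqP ->.
rewrite leq_eqVlt => /orP [/eqP -> //| Hik].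
exact: leq_trans (H k) (IH Hik).
Qed.

Section Mu.
Variable mu : seq nat.
Hypothesis mono : forall k, (nth 0%N mu k.+1 <= nth 0%N mu k)%N.
Hypothesis bound : forall k, (k < n)%N -> (nth 0%N mu k + k < n)%N.

Lemma Mmu_E (i j : 'I_n) : Mmu R n mu i j =
  ee (nth 0%N mu i) j - (if (0 < i)%N then ee (nth 0%N mu i.-1) j else 0).
Proof.
rewrite mxE; case: (posnP i) => Hi.
  by rewrite Hi subr0.
case: ifP => // H.
have := mono i.-1; rewrite prednK // => H2.
have -> : nth 0%N mu i = nth 0%N mu i.-1 by apply/eqP; rewrite eqn_leq H2 leqNgt H.
by rewrite subrr.
Qed.

Lemma psum_Mmu (j : 'I_n) k : (k < n)%N -> psum (fun i => Mmu R n mu i j) k = ee (nth 0%N mu k) j.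
Proof.
elim: k => [|k IH] Hk.
  by rewrite (psum0 _ (i := Ordinal Hk)) // Mmu_E /= subr0.
by rewrite (psumS _ Hk) IH ?(ltnW Hk) // Mmu_E /= addrC subrK.
Qed.

Definition Bmu := Mmu R n mu + Cmx.

Lemma psum_B (j : 'I_n) k : (k < n)%N -> psum (fun i => Bmu i j) k = ee (nth 0%N mu k) j + (n <= k + j)%:R.
Proof.
move=> Hk; rewrite -psum_Mmu // -psum_C // -psumD.
by rewrite /psum; apply: eq_bigr => i _; rewrite mxE.
Qed.

Lemma C_ee (i j : 'I_n) : Cmx i j = ee (n - i) j.
Proof.
rewrite mxE b2R /ee; congr (_%:R).
apply/eqP/eqP; have := ltn_ord i; lia.
Qed.

Lemma row_B (P : pred nat) (i : 'I_n) : \sum_(j < n | P j) Bmu i j =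
  (P (nth 0%N mu i))%:R - (if (0 < i)%N then (P (nth 0%N mu i.-1))%:R else 0)
  + (P (n - i)%N && (0 < i)%N)%:R.
Proof.
have Hi := ltn_ord i.
rewrite (eq_bigr (fun j : 'I_n => ee (nth 0%N mu i) j - (if (0 < i)%N then ee (nth 0%N mu i.-1) j else 0) + ee (n - i) j)); last first.
  by move=> j _; rewrite mxE Mmu_E C_ee.
rewrite big_split sumrB sum_ind /=.
have H1 := bound Hi.
have -> : (nth 0%N mu i < n)%N by lia.
rewrite andbT; congr (_ - _ + _).
  case: (posnP i) => Hp; first by rewrite big1.
  rewrite sum_ind; have -> : (nth 0%N mu i.-1 < n)%N.
    have := @bound i.-1; lia.
  by rewrite andbT.
rewrite sum_ind; congr (_%:R); case: (posnP i) => Hp.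
  by rewrite Hp subn0 ltnn !andbF.
have -> : (n - i < n)%N by lia.
by rewrite andbT.
Qed.


Lemma ee01 a j : ee a j = 0 \/ ee a j = 1.
Proof. by rewrite /ee; case: (j == a); [right|left]. Qed.

Lemma psum_B01 (j : 'I_n) k : (k < n)%N -> psum (fun i => Bmu i j) k = 0 \/ psum (fun i => Bmu i j) k = 1.
Proof.
move=> Hk; rewrite psum_B // /ee; have := bound Hk.
case: eqP => [-> H|_].
  have -> : (n <= k + nth 0%N mu k)%N = false by apply/negbTE; lia.
  by right; rewrite addr0.
by rewrite add0r; case: (n <= k + j)%N; [right|left].
Qed.

Lemma diff01 (x y : R) : (x = 0 \/ x = 1) -> (y = 0 \/ y = 1) ->
  x - y = 0 \/ x - y = 1 \/ x - y = -1.
Proof.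
by move=> [->|->] [->|->]; rewrite ?subrr ?subr0 ?sub0r; auto.
Qed.

Lemma B_entry (i j : 'I_n) : Bmu i j =
  ee (nth 0%N mu i) j - (if (0 < i)%N then ee (nth 0%N mu i.-1) j else 0) + ee (n - i) j.
Proof. by rewrite mxE Mmu_E C_ee. Qed.

Lemma B_zero (i j : 'I_n) : ((n < i + j)%N || (j < nth 0%N mu i)%N) -> Bmu i j = 0.
Proof.
move=> H; rewrite B_entry /ee.
have Hi := bound (ltn_ord i).
have Hm : (0 < i)%N -> (nth 0%N mu i.-1 + i.-1 < n)%N.
  move=> Hp; apply: bound; lia.
have Hmono : (0 < i)%N -> (nth 0%N mu i <= nth 0%N mu i.-1)%N.
  by move=> Hp; have := mono i.-1; rewrite prednK.
have -> : (nat_of_ord j == nth 0%N mu i) = false.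
  apply/negbTE; case/orP: H => H; lia.
have -> : (nat_of_ord j == (n - i)%N) = false.
  apply/negbTE; case/orP: H => H; lia.
case: (posnP i) => Hp; first by rewrite subrr addr0.
have -> : (nat_of_ord j == nth 0%N mu i.-1) = false.
  apply/negbTE; have := Hm Hp; have := Hmono Hp; case/orP: H => H; lia.
by rewrite subrr addr0.
Qed.

Lemma colsum_B (j : 'I_n) : (0 < n)%N -> \sum_(i < n) Bmu i j = 1.
Proof.
move=> Hn.
have Hn1 : (n.-1 < n)%N by lia.
have -> : \sum_(i < n) Bmu i j = psum (fun i => Bmu i j) n.-1.
  by rewrite /psum; apply: eq_bigl => i; have := ltn_ord i; lia.
rewrite psum_B // /ee.
have := bound Hn1.
case: eqP => [-> H|H _].
  have -> : (n <= n.-1 + nth 0%N mu n.-1)%N = false by apply/negbTE; lia.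
  by rewrite addr0.
have -> : (n <= n.-1 + j)%N.
  have : nth 0%N mu n.-1 = 0%N by have := bound Hn1; lia.
  move=> H0; rewrite H0 in H; have : (nat_of_ord j != 0%N) by apply/eqP.
  lia.
by rewrite add0r.
Qed.

Lemma B_ASM : (0 < n)%N -> is_ASM Bmu.
Proof.
move=> Hn; split.
- move=> i j; rewrite (entry_psum (fun i => Bmu i j) i).
  case: (posnP i) => Hp.
    by rewrite subr0; case: (psum_B01 j (ltn_ord i)); auto.
  apply: diff01; apply: psum_B01 => //; have := ltn_ord i; lia.
- move=> i j /=; case: (ltnP i n) => Hi.
    exact: (psum_B01 j Hi).
  right; rewrite -(colsum_B j Hn); apply: eq_bigl => i'; have := ltn_ord i'; lia.
- move=> i j /=; rewrite (row_B (fun j' => (j' <= j)%N)).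
  have Hi := ltn_ord i.
  case: (posnP i) => Hp.
    by rewrite subr0 andbF addr0; case: (_ <= _)%N; auto.
  have Hm : (nth 0%N mu i.-1 + i.-1 < n)%N by apply: bound; lia.
  have Hmono : (nth 0%N mu i <= nth 0%N mu i.-1)%N.
    by have := mono i.-1; rewrite prednK.
  rewrite andbT.
  case: (leqP (nth 0%N mu i.-1) j) => H2.
    have -> : (nth 0%N mu i <= j)%N by lia.
    by rewrite subrr add0r; case: (_ <= _)%N; auto.
  have -> : (n - i <= j)%N = false by apply/negbTE; lia.
  by rewrite addr0 subr0; case: (_ <= _)%N; auto.
- move=> i; have := row_B xpredT i; rewrite /= => ->.
  by case: (posnP i) => Hp; rewrite ?subr0 ?addr0 // subrr add0r.
- by move=> j; apply: colsum_B.
Qed.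

End Mu.


Lemma one_hot (F : 'I_n -> R) : (forall j, F j = 0 \/ F j = 1) -> \sum_(j < n) F j = 1 ->
  exists c : 'I_n, forall j : 'I_n, F j = ee c j.
Proof.
move=> H01 Hs.
have Hge : forall j, 0 <= F j by move=> j; case: (H01 j) => ->; rewrite ?lexx ?ler01.
case: (pickP (fun c => F c == 1)) => [c /eqP Hc | H].
  exists c => j; rewrite /ee.
  case: (eqVneq j c) => [->|Hjc]; first by rewrite eqxx Hc.
  have -> : (nat_of_ord j == nat_of_ord c) = false by apply/negbTE; rewrite (inj_eq val_inj).
  move: Hs; rewrite (bigD1 c) //= Hc => /eqP; rewrite -subr_eq0 addrC addrK => /eqP Hs.
  by rewrite (psumr_eq0P (fun i _ => Hge i) Hs).
exfalso.
have : \sum_(j < n) F j = 0.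
  apply: big1 => j _; case: (H01 j) => // Hj; by move: (H j); rewrite Hj eqxx.
by rewrite Hs => /eqP; rewrite oner_eq0.
Qed.

Lemma rowsum_C (i : 'I_n) : \sum_(j < n) Cmx i j = ((n - i) < n)%N%:R.
Proof.
rewrite (eq_bigr (fun j : 'I_n => ee (n - i) j)); last by move=> j _; rewrite C_ee.
by have := sum_ind xpredT (n - i); rewrite /= => ->.
Qed.

Section Struct.
Variable lam : seq nat.
Hypothesis lam_part : is_partition lam.
Hypothesis lam_delta : subpart lam (delta n).

Lemma struct (B : 'M[R]_n) : is_ASM B ->
  (forall (k j : 'I_n), (n <= k + j)%N -> psum (fun i => B i j) k = 1) ->
  (forall (k j : 'I_n), (j < nth 0%N lam k)%N -> psum (fun i => B i j) k = 0) ->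
  exists mu, [/\ is_partition mu, subpart lam mu, subpart mu (delta n) & B = Mmu R n mu + Cmx].
Proof.
move=> [Hent Hcol Hrow Hrs Hcs] HZ HL.
set D := B - Cmx.
pose F k (j : 'I_n) := psum (fun i => D i j) k.
have SD : forall (k j : 'I_n), F k j = psum (fun i => B i j) k - (n <= k + j)%N%:R.
  move=> k j; rewrite -psum_C // -psumB /F /psum; apply: eq_bigr => i _; by rewrite /D !mxE.
have SD01 : forall (k j : 'I_n), F k j = 0 \/ F k j = 1.
  move=> k j; rewrite SD; case: (leqP n (k + j)) => H.
    by rewrite HZ // subrr; left.
  by rewrite subr0; exact: Hcol.
have SDsum : forall k : 'I_n, \sum_(j < n) F k j = 1.
  move=> k; rewrite /F /psum exchange_big /=.
  have -> : \sum_(i < n | (i <= k)%N) \sum_(j < n) D i j = psum (fun i => 1 - ((n - i) < n)%N%:R) k.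
    apply: eq_bigr => i _; rewrite /D.
    rewrite (eq_bigr (fun j : 'I_n => B i j - Cmx i j)); last by move=> j _; rewrite !mxE.
    by rewrite sumrB Hrs rowsum_C.
  have : (k < n)%N by [].
  elim: (nat_of_ord k) => [|m IH] Hm.
    rewrite (psum0 _ (i := Ordinal Hm)) //= subn0 ltnn subr0 //.
  rewrite (psumS _ Hm) IH ?(ltnW Hm) //=.
  have -> : (n - m.+1 < n)%N by lia.
  by rewrite subrr addr0.
have ex_c : forall k : 'I_n, exists c : 'I_n, forall j : 'I_n, F k j = ee c j.
  by move=> k; apply: one_hot => //; exact: SD01.
pose cf k := if [pick c : 'I_n | F k c == 1] is Some c then nat_of_ord c else 0%N.
have Hcf : forall k : 'I_n, exists c : 'I_n, cf k = c /\ forall j, F k j = ee c j.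
  move=> k; have [c Hc] := ex_c k; exists c; split => //.
  rewrite /cf; case: pickP => [c' /eqP H|H].
    move: H; rewrite Hc /ee; case: eqP => // _ /eqP; by rewrite eq_sym oner_eq0.
  by move: (H c); rewrite Hc /ee eqxx eqxx.
have Hcf' : forall (k j : 'I_n), F k j = ee (cf k) j.
  by move=> k j; have [c [-> Hc]] := Hcf k.
have cfn : forall k : 'I_n, (k + cf k < n)%N.
  move=> k; have [c [Hc1 Hc2]] := Hcf k; rewrite Hc1 ltnNge; apply/negP => H.
  have := SD k c; rewrite HZ // Hc2 /ee H eqxx subrr => /eqP; by rewrite oner_eq0.
have cL : forall k : 'I_n, (nth 0%N lam k <= cf k)%N.
  move=> k; have [c [Hc1 Hc2]] := Hcf k; rewrite Hc1 leqNgt; apply/negP => H.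
  have := cfn k; rewrite Hc1 => H2.
  have := SD k c; rewrite HL // Hc2 /ee eqxx.
  have -> : (n <= k + c)%N = false by apply/negbTE; lia.
  rewrite subr0 => /eqP; by rewrite oner_eq0.
have cmono : forall k (Hk : (k.+1 < n)%N), (cf k.+1 <= cf k)%N.
  move=> k Hk; rewrite leqNgt; apply/negP => Hlt.
  pose k1 := Ordinal Hk; pose k0 := Ordinal (ltnW Hk).
  have Hc0 := cfn k0; have Hc1 := cfn k1; rewrite /= in Hc0 Hc1.
  have := Hrow k1 (cf k); rewrite /=.
  rewrite (eq_bigr (fun j : 'I_n => ee (cf k.+1) j - ee (cf k) j + ee (n - k.+1) j)); last first.
    move=> j _.
    have -> : B k1 j = D k1 j + Cmx k1 j by rewrite /D !mxE subrK.
    rewrite C_ee /=; congr (_ + _).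
    rewrite (entry_psum (fun i => D i j) k1) /=.
    by rewrite -/(F k.+1 j) -/(F k j) (Hcf' k1) (Hcf' k0).
  rewrite big_split sumrB /= !(sum_ind (fun j => (j <= cf k)%N)) /=.
  have -> : (cf k.+1 <= cf k)%N = false by apply/negbTE; lia.
  rewrite leqnn /=.
  have -> : (cf k < n)%N by lia.
  have -> : (n - k.+1 <= cf k)%N = false by apply/negbTE; lia.
  rewrite sub0r addr0 => -[] /eqP; first by rewrite oppr_eq0 oner_eq0.
  rewrite -subr_eq0 -opprD oppr_eq0 => H; have H2 : (2%:R : R) == 0 := H; by rewrite pnatr_eq0 in H2.
pose mu := mkseq cf n.
have nmu : forall k, (k < n)%N -> nth 0%N mu k = cf k by move=> k Hk; rewrite nth_mkseq.
have mmono : forall k, (nth 0%N mu k.+1 <= nth 0%N mu k)%N.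
  move=> k; case: (ltnP k.+1 n) => Hk.
    rewrite !nmu ?(ltnW Hk) //; exact: cmono.
  by rewrite nth_default // size_mkseq.
have mbound : forall k, (k < n)%N -> (nth 0%N mu k + k < n)%N.
  move=> k Hk; rewrite nmu // addnC; exact: (cfn (Ordinal Hk)).
exists mu; split.
- exact: mono_sorted.
- move=> k; case: (ltnP k n) => Hk.
    rewrite nmu //; exact: (cL (Ordinal Hk)).
  have := lam_delta k; rewrite nth_delta; have -> : (n.-1 - k = 0)%N by lia.
  by rewrite leqn0 => /eqP ->.
- move=> k; rewrite nth_delta; case: (ltnP k n) => Hk.
    rewrite nmu //; have := cfn (Ordinal Hk); rewrite /=; lia.
  by rewrite nth_default // size_mkseq.
- apply/matrixP => i j; rewrite mxE (Mmu_E mmono).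
  have HD : D i j = F i j - (if (0 < i)%N then F i.-1 j else 0) by exact: (entry_psum (fun i => D i j) i).
  rewrite (Hcf' i) in HD.
  have E : (if (0 < i)%N then F i.-1 j else 0) = (if (0 < i)%N then ee (nth 0%N mu i.-1) j else 0).
    case: (posnP i) => Hp //.
    have Hi1 : (i.-1 < n)%N by have := ltn_ord i; lia.
    by rewrite (Hcf' (Ordinal Hi1)) nmu.
  rewrite E -nmu // in HD; rewrite -HD /D !mxE; by rewrite subrK.
Qed.

End Struct.


Lemma face1 k (w x : 'I_k -> R) : (forall t, 0 <= w t) -> (forall t, x t <= 1) ->
  \sum_t w t = 1 -> \sum_t w t * x t = 1 -> forall t, w t != 0 -> x t = 1.
Proof.
move=> Hw Hx Hs Hwx t Ht.
have H0 : \sum_t w t * (1 - x t) = 0.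
  rewrite (eq_bigr (fun t => w t - w t * x t)); last by move=> i _; rewrite mulrBr mulr1.
  by rewrite sumrB Hs Hwx subrr.
have Hnn : forall i, 0 <= w i * (1 - x i) by move=> i; rewrite mulr_ge0 // subr_ge0.
have := psumr_eq0P (fun i _ => Hnn i) H0 (i := t) isT.
by move/eqP; rewrite mulf_eq0 (negbTE Ht) /= subr_eq0 => /eqP <-.
Qed.

Lemma face0 k (w x : 'I_k -> R) : (forall t, 0 <= w t) -> (forall t, 0 <= x t) ->
  \sum_t w t * x t = 0 -> forall t, w t != 0 -> x t = 0.
Proof.
move=> Hw Hx Hwx t Ht.
have := psumr_eq0P (fun i _ => mulr_ge0 (Hw i) (Hx i)) Hwx (i := t) isT.
by move/eqP; rewrite mulf_eq0 (negbTE Ht) /= => /eqP.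
Qed.

Lemma sum_entry k (w : 'I_k -> R) (q : 'I_k -> 'M[R]_n) i j :
  (\sum_t w t *: q t) i j = \sum_t w t * q t i j.
Proof. rewrite summxE; apply: eq_bigr => t _; by rewrite mxE. Qed.

Lemma face (lam : seq nat) k (q : 'I_k -> 'M[R]_n) (w : 'I_k -> R) :
  is_partition lam -> (forall t, is_ASM (q t)) -> (forall t, 0 <= w t) -> \sum_t w t = 1 ->
  (forall i j : 'I_n, ((n.+1 <= i + j)%N || in_part lam i j) -> (\sum_t w t *: q t) i j = 0) ->
  forall t, w t != 0 ->
  (forall (kk j : 'I_n), (n <= kk + j)%N -> psum (fun i => q t i j) kk = 1) /\
  (forall (kk j : 'I_n), (j < nth 0%N lam kk)%N -> psum (fun i => q t i j) kk = 0).
Proof.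
move=> Hlp Hq Hw Hs HA t Ht.
set A := \sum_t w t *: q t in HA.
have psA : forall (kk : nat) (j : 'I_n), psum (fun i => A i j) kk = \sum_t w t * psum (fun i => q t i j) kk.
  move=> kk j; rewrite /psum /A.
  under eq_bigr do rewrite sum_entry.
  rewrite exchange_big; apply: eq_bigr => t' _; by rewrite mulr_sumr.
have bnd : forall t' (kk j : 'I_n), 0 <= psum (fun i => q t' i j) kk /\ psum (fun i => q t' i j) kk <= 1.
  move=> t' kk j; have [_ Hc _ _ _] := Hq t'; have := Hc kk j; rewrite /= /psum.
  by case=> ->; rewrite ?lexx ?ler01.
split.
- move=> kk j H.
  have H1 : psum (fun i => A i j) kk = 1.
    have -> : psum (fun i => A i j) kk = \sum_(i < n) A i j.
      rewrite /psum big_mkcond; apply: eq_bigr => i _; case: ifP => // Hi.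
      symmetry; apply: HA; apply/orP; left; move/negbT: Hi; rewrite -ltnNge; lia.
    rewrite /A; under eq_bigr do rewrite sum_entry.
    rewrite exchange_big /= (eq_bigr (fun t' => w t')) // => t' _.
    rewrite -mulr_sumr; have [_ _ _ _ Hcs] := Hq t'; by rewrite Hcs mulr1.
  rewrite psA in H1.
  apply: (face1 Hw _ Hs H1 Ht) => t'; exact: (bnd t' kk j).2.
- move=> kk j H.
  have H1 : psum (fun i => A i j) kk = 0.
    rewrite /psum; apply: big1 => i Hi; apply: HA; apply/orP; right.
    rewrite /in_part; apply: (leq_trans H); exact: (mono_le (sorted_mono Hlp)).
  rewrite psA in H1.
  apply: (face0 Hw _ H1 Ht) => t'; exact: (bnd t' kk j).1.
Qed.

End Aux.

Lemma sum_shift (R : realType) n k (w : 'I_k -> R) (p : 'I_k -> 'M[R]_n) (C : 'M[R]_n) :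
  \sum_t w t = 1 -> \sum_t w t *: p t + C = \sum_t w t *: (p t + C).
Proof.
move=> Hs; under [RHS]eq_bigr do rewrite scalerDr.
by rewrite big_split /= -scaler_suml Hs scale1r.
Qed.

Lemma intmx_addC (R : realType) n (x : 'M[R]_n) : intmx x <-> intmx (x + Cmx R n).
Proof.
split=> H i j.
  have [z Hz] := H i j; rewrite !mxE Hz.
  case: ifP => _; last by exists z; rewrite addr0.
  by exists (z + 1)%R; rewrite rmorphD /= rmorph1.
have [z Hz] := H i j; move: Hz; rewrite !mxE.
case: ifP => _; last by rewrite addr0 => ->; exists z.
move=> Hz; exists (z - 1)%R.
by rewrite rmorphB /= rmorph1 -Hz addrK.
Qed.

Theorem mainTheorem8 (R : realType) (n : nat) (lambda : seq nat) :
  (2 <= n)%N -> is_partition lambda -> subpart lambda (delta n) ->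
  integral_equiv (@phi R n) (@PASM R n lambda) (@ASMCRY R n lambda).
Proof.
move=> Hn Hlp Hld.
have Hn0 : (0 < n)%N by lia.
have valid : forall mu, is_partition mu -> subpart mu (delta n) ->
    (forall k, (nth 0%N mu k.+1 <= nth 0%N mu k)%N) /\
    (forall k, (k < n)%N -> (nth 0%N mu k + k < n)%N).
  move=> mu Hp Hd; split; first exact: sorted_mono.
  move=> k Hk; have := Hd k; rewrite nth_delta; lia.
have fwd : forall x, @PASM R n lambda x -> @ASMCRY R n lambda (phi x).
  move=> x [k [p [w [Hp Hw Hs ->]]]].
  rewrite phiE sum_shift //; split.
    exists k, (fun t => p t + Cmx R n), w; split => // t.
    have [mu [H1 H2 H3 ->]] := Hp t.
    have [Hm Hb] := valid mu H1 H3; exact: B_ASM.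
  move=> i j H; rewrite sum_entry; apply: big1 => t _.
  have [mu [H1 H2 H3 ->]] := Hp t.
  have [Hm Hb] := valid mu H1 H3.
  rewrite (@B_zero R n mu Hm Hb) ?mulr0 //.
  case/orP: H => H; apply/orP; [left; exact: H | right].
  by apply: leq_trans H _; apply: H2.
have bwd : forall y, @ASMCRY R n lambda y -> @PASM R n lambda (y - Cmx R n).
  move=> y [[k [q [w [Hq Hw Hs Hy]]]] HZ].
  pose p t := if w t == 0 then Mmu R n lambda else q t - Cmx R n.
  exists k, p, w; split => //.
  - move=> t; rewrite /p; case: eqP => Ht.
      by exists lambda; split.
    have HA : forall i j : 'I_n, ((n.+1 <= i + j)%N || in_part lambda i j) -> (\sum_t w t *: q t) i j = 0.
      by move=> i j H; rewrite -Hy; apply: HZ.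
    have [HZ' HL'] := face Hlp Hq Hw Hs HA (t := t) (introN eqP Ht).
    have [mu [H1 H2 H3 H4]] := struct Hld (Hq t) HZ' HL'.
    by exists mu; split => //; rewrite H4 addrK.
  - rewrite Hy; apply/(canLR (addrK (Cmx R n))); rewrite sum_shift //.
    apply: eq_bigr => t _; rewrite /p; case: eqP => [->|_]; first by rewrite !scale0r.
    by rewrite subrK.
split.
- exists (idfun : {linear 'M[R]_n -> 'M[R]_n}), (Cmx R n) => x; by rewrite phiE.
- split => //.
  + by move=> x y _ _; rewrite !phiE => /addIr.
  + move=> y Hy; exists (y - Cmx R n); split; first exact: bwd.
    by rewrite phiE subrK.
- split.
  + move=> x [Hi [k [p [w [Hp Hs Hx]]]]]; split.
      by rewrite phiE; exact: (proj1 (intmx_addC x)) Hi.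
    rewrite Hx; exists k, (fun t => phi (p t)), w; split => //.
      by move=> t; apply: fwd; apply: Hp.
    rewrite phiE sum_shift //; apply: eq_bigr => t _; by rewrite phiE.
  + by move=> x y _ _; rewrite !phiE => /addIr.
  + move=> y [Hi [k [q [w [Hq Hs Hy]]]]].
    exists (y - Cmx R n); split; last by rewrite phiE subrK.
    split.
      by apply/intmx_addC; rewrite subrK.
    exists k, (fun t => q t - Cmx R n), w; split => //.
      by move=> t; apply: bwd; apply: Hq.
    rewrite Hy; apply/(canLR (addrK (Cmx R n))); rewrite sum_shift //.
    by apply: eq_bigr => t _; rewrite subrK.
Qed.
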